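(* Let $f,w\colon\mathbb{R}^d\to[0,\infty)$ be two proper log-concave functions such that the support of $w$ is bounded. Then for every $\xi\in(0,\|f\|_\infty)$ there is a positive position $g$ of $w$ with $g\le f$ and $\|g\|_\infty=\xi$.
   Context: A function $\mathbb{R}^d\to[0,\infty)$ is proper log-concave if it is upper semi-continuous, log-concave, with finite positive integral. The positive positions of $w$ are the functions $x\mapsto\alpha\,w(Ax+a)$ with $A$ a positive definite $d\times d$ matrix, $\alpha>0$, $a\in\mathbb{R}^d$. $g\le f$ means pointwise inequality; $\|\cdot\|_\infty$ is the supremum norm. *)

(* Defs.v *)
From HB Require Import structures.
From mathcomp Require Import all_boot all_order all_algebra.
From mathcomp Require Import all_classical all_reals all_analysis.
Set Implicit Arguments. Unset Strict Implicit. Unset Printing Implicit Defensive.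
Import Order.TTheory GRing.Theory Num.Theory.
Import numFieldNormedType.Exports.
Local Open Scope classical_set_scope.
Local Open Scope ring_scope.

(* Lebesgue integral of a nonnegative function on R^d, defined as the
   iterated one-dimensional Lebesgue integral (for nonnegative Borel
   functions this is the integral w.r.t. d-dimensional Lebesgue measure,
   by Tonelli). *)
Fixpoint lebesgue_int (R : realType) (d : nat) : ('cV[R]_d -> R) -> \bar R :=
  match d with
  | 0 => fun f => (f 0)%:E
  | n.+1 => fun f : 'cV[R]_n.+1 -> R =>
      (\int[@lebesgue_measure R]_(t in [set: R])
          lebesgue_int (fun y : 'cV[R]_n =>
            f (col_mx (const_mx (t : R) : 'cV[R]_1) y)))%E
  end.

Definition usc (R : realType) (d : nat) (f : 'cV[R]_d -> R) : Prop :=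
  forall x : 'cV[R]_d, forall e : R, 0 < e ->
    \forall y \near x, f y < f x + e.

(* log-concavity of a nonnegative function: log f concave (log 0 = -oo) *)
Definition log_concave (R : realType) (d : nat) (f : 'cV[R]_d -> R) : Prop :=
  forall (x y : 'cV[R]_d) (l : R), 0 < l < 1 ->
    f x `^ l * f y `^ (1 - l) <= f (l *: x + (1 - l) *: y).

Definition proper_log_concave (R : realType) (d : nat) (f : 'cV[R]_d -> R) : Prop :=
  [/\ forall x, 0 <= f x, usc f, log_concave f &
      (0 < lebesgue_int f /\ lebesgue_int f < +oo)%E].

Definition sup_norm (R : realType) (d : nat) (f : 'cV[R]_d -> R) : \bar R :=
  ereal_sup (range (fun x => (f x)%:E)).

Definition pos_def (R : realType) (d : nat) (A : 'M[R]_d) : Prop :=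
  A^T = A /\ forall x : 'cV[R]_d, x != 0 -> 0 < (x^T *m A *m x) 0 0.

Definition bounded_support (R : realType) (d : nat) (w : 'cV[R]_d -> R) : Prop :=
  exists M : R, forall x, w x != 0 -> `|x| <= M.

Definition positive_position (R : realType) (d : nat) (w g : 'cV[R]_d -> R) : Prop :=
  exists (A : 'M[R]_d) (alpha : R) (a : 'cV[R]_d),
    [/\ pos_def A, 0 < alpha & forall x, g x = alpha * w (A *m x + a)].

(* Main.v *)
Require Import Defs.
From HB Require Import structures.
From mathcomp Require Import all_boot all_order all_algebra.
From mathcomp Require Import all_classical all_reals all_analysis.
From mathcomp Require Import ring lra.
From mathcomp Require Import measurable_realfun.
Import Order.TTheory GRing.Theory Num.Theory.
Import numFieldNormedType.Exports.
Set Implicit Arguments. Unset Strict Implicit. Unset Printing Implicit Defensive.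
Local Open Scope classical_set_scope.
Local Open Scope ring_scope.

Definition qc (R : realType) (d : nat) (f : 'cV[R]_d -> R) : Prop :=
  forall (x y : 'cV[R]_d) (l c : R), 0 < l < 1 -> 0 < c -> c <= f x -> c <= f y ->
    c <= f (l *: x + (1 - l) *: y).

Definition inbox (R : realType) (d : nat) (z : 'cV[R]_d) (r : R) (y : 'cV[R]_d) :=
  forall i, `|y i 0 - z i 0| < r.

Lemma lc_qc (R : realType) (d : nat) (f : 'cV[R]_d -> R) :
  (forall x, 0 <= f x) -> log_concave f -> qc f.
Proof.
move=> f0 lc x y l c l01 c0 cx cy.
apply: le_trans (lc x y l l01).
have -> : c = c `^ l * c `^ (1 - l).
  rewrite -powRD; last by rewrite (gt_eqF c0) implybT.
  by rewrite addrC subrK powRr1 // ltW.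
case/andP: l01 => l0 l1.
apply: ler_pM; rewrite ?powR_ge0 //.
  by apply: (ge0_ler_powR (ltW l0)) => //; rewrite nnegrE ?f0 ?ltW.
have l1' : 0 <= 1 - l by rewrite subr_ge0 ltW.
by apply: (ge0_ler_powR l1') => //; rewrite nnegrE ?f0 ?ltW.
Qed.

Lemma qc_slice (R : realType) (n : nat) (f : 'cV[R]_n.+1 -> R) (t : R) :
  qc f -> qc (fun y : 'cV[R]_n => f (col_mx (const_mx t : 'cV[R]_1) y)).
Proof.
move=> q x y l c l01 c0 /= cx cy /=.
have := q (col_mx (const_mx t : 'cV_1) x) (col_mx (const_mx t : 'cV_1) y) l c l01 c0 cx cy.
have E : l *: col_mx (const_mx t : 'cV_1) x + (1 - l) *: col_mx (const_mx t : 'cV_1) y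
   = col_mx (const_mx t : 'cV_1) (l *: x + (1 - l) *: y).
  by rewrite !scale_col_mx add_col_mx -scalerDl addrC subrK scale1r.
by rewrite E.
Qed.

Lemma lebesgue_int_ge0 (R : realType) (d : nat) (f : 'cV[R]_d -> R) :
  (forall x, 0 <= f x) -> (0 <= lebesgue_int f)%E.
Proof.
elim: d f => [|n IH] f f0 /=; first by rewrite lee_fin.
apply: integral_ge0 => t _; apply: IH => y; exact: f0.
Qed.
Lemma entry_le_norm (R : realType) m n (x : 'M[R]_(m, n)) i j : `|x i j| <= `|x|.
Proof.
have /mapP[k Hk ->] : `|x i j| \in [seq `|x k.1 k.2| | k : 'I_m * 'I_n].
  by apply/mapP; exists (i, j) => //=; rewrite mem_enum.
by rewrite [leRHS]/Num.Def.normr /= mx_normrE; apply/bigmax_geP; right => /=; exists k.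
Qed.

Lemma box_step (R : realType) (n : nat) (f : 'cV[R]_n.+1 -> R) t1 t2
  (z1 z2 : 'cV[R]_n) (r1 r2 c1 c2 : R) : qc f -> t1 != t2 -> 0 < r1 -> 0 < r2 -> 0 < c1 -> 0 < c2 ->
  (forall u, inbox z1 r1 u -> c1 <= f (col_mx (const_mx t1 : 'cV_1) u)) ->
  (forall u, inbox z2 r2 u -> c2 <= f (col_mx (const_mx t2 : 'cV_1) u)) ->
  exists z r c, [/\ 0 < r, 0 < c & forall y, inbox z r y -> c <= f y].
Proof.
move=> q t12 r10 r20 c10 c20 B1 B2.
set D := `|t2 - t1|.
have D0 : 0 < D by rewrite normr_gt0 subr_eq0 eq_sym.
set E := `|z1 - z2|.
have E0 : 0 <= E by exact: normr_ge0.
set r0 := Num.min r1 r2.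
have r00 : 0 < r0 by rewrite lt_min r10 r20.
set r := Num.min (D / 2) (r0 * D / (D + E)).
have r0' : 0 < r.
  rewrite lt_min; apply/andP; split; first lra.
  by apply: divr_gt0; [apply: mulr_gt0 | lra].
have rD : r <= D / 2 by rewrite ge_min lexx.
have rE : r * (D + E) <= r0 * D.
  rewrite -ler_pdivlMr; last by lra.
  by rewrite ge_min lexx orbT.
set tm := (t1 + t2) / 2.
set m := 2^-1 *: (z1 + z2).
exists (col_mx (const_mx tm : 'cV_1) m), r, (Num.min c1 c2).
split => //; first by rewrite lt_min c10 c20.
move=> y By.
set s := y (lshift n (ord0 : 'I_1)) 0.
set y' : 'cV_n := dsubmx (y : 'cV_(1 + n)).
have Ey : y = col_mx (const_mx s : 'cV_1) y'.
  rewrite -[LHS](vsubmxK (y : 'cV_(1 + n))).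
  have -> : usubmx (y : 'cV_(1 + n)) = const_mx s.
    by apply/matrixP => i j; rewrite !mxE !ord1.
  by [].
have Bs : `|s - tm| < r.
  have := By (lshift n (ord0 : 'I_1)).
  have e : (col_mx (const_mx tm : 'cV_1) m : 'cV_(1+n)) (lshift n (ord0 : 'I_1)) 0 = tm.
    by rewrite col_mxEu mxE.
  by rewrite e.
have By' : forall j, `|y' j 0 - m j 0| < r.
  move=> j; have := By (rshift 1 j).
  have e : (col_mx (const_mx tm : 'cV_1) m : 'cV_(1+n)) (rshift 1 j) 0 = m j 0.
    by rewrite col_mxEd.
  have e' : (y : 'cV_(1+n)) (rshift 1 j) 0 = y' j 0 by rewrite /y' mxE.
  by rewrite e e'.
have t21 : t2 - t1 != 0 by rewrite subr_eq0 eq_sym.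
set l := (t2 - s) / (t2 - t1).
have hl : l - 2^-1 = (tm - s) / (t2 - t1) by rewrite /l /tm; field.
have Nl : `|l - 2^-1| = `|s - tm| / D by rewrite hl normrM normfV distrC.
have l01 : 0 < l < 1.
  have h : `|l - 2^-1| < 2^-1.
    rewrite Nl ltr_pdivrMr //; lra.
  move: h; rewrite ltr_norml => /andP[h1 h2]; apply/andP; split; lra.
set e : 'cV_n := y' - (l *: z1 + (1 - l) *: z2).
have He : forall j, `|e j 0| < r0.
  move=> j.
  have ej : e j 0 = (y' j 0 - m j 0) - (l - 2^-1) * (z1 j 0 - z2 j 0).
    by rewrite !mxE; field.
  rewrite ej; apply: le_lt_trans (ler_normB _ _) _; rewrite normrM Nl.
  have hz : `|z1 j 0 - z2 j 0| <= E.
    by have := entry_le_norm (z1 - z2) j 0; rewrite !mxE.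
  have hA := By' j.
  have hS := Bs.
  move: hz hA hS.
  set A := `|y' j 0 - m j 0|; set S := `|s - tm|; set Z := `|z1 j 0 - z2 j 0|.
  have A0 : 0 <= A by exact: normr_ge0.
  have S0 : 0 <= S by exact: normr_ge0.
  have Z0 : 0 <= Z by exact: normr_ge0.
  move=> hz hA hS.
  rewrite -(ltr_pM2r D0).
  have -> : (A + S / D * Z) * D = A * D + S * Z by field; lra.
  nra.
have Bu1 : inbox z1 r1 (z1 + e).
  move=> j; rewrite mxE addrAC subrr add0r; apply: lt_le_trans (He j) _.
  by rewrite ge_min lexx.
have Bu2 : inbox z2 r2 (z2 + e).
  move=> j; rewrite mxE addrAC subrr add0r; apply: lt_le_trans (He j) _.
  by rewrite ge_min lexx orbT.
have cm0 : 0 < Num.min c1 c2 by rewrite lt_min c10 c20.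
have P1 : Num.min c1 c2 <= f (col_mx (const_mx t1 : 'cV_1) (z1 + e)).
  by apply: le_trans (B1 _ Bu1); rewrite ge_min lexx.
have P2 : Num.min c1 c2 <= f (col_mx (const_mx t2 : 'cV_1) (z2 + e)).
  by apply: le_trans (B2 _ Bu2); rewrite ge_min lexx orbT.
have := q _ _ l _ l01 cm0 P1 P2.
have -> : l *: (col_mx (const_mx t1 : 'cV_1) (z1 + e) : 'cV_(1+n))
   + (1 - l) *: (col_mx (const_mx t2 : 'cV_1) (z2 + e) : 'cV_(1+n)) = y.
  rewrite Ey; apply/matrixP => i j; rewrite !mxE; case: splitP => k _; rewrite !mxE.
    by rewrite /l; field.
  ring.
by [].
Qed.
Lemma int_two_points (R : realType) (F : R -> \bar R) :
  (forall t, (0 <= F t)%E) ->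
  (0 < \int[@lebesgue_measure R]_(t in [set: R]) F t)%E ->
  exists t1 t2, [/\ t1 != t2, (0 < F t1)%E & (0 < F t2)%E].
Proof.
move=> F0 Ipos.
have Fz : forall t, ~ (0 < F t)%E -> F t = 0%E.
  move=> t /negP; rewrite lt_neqAle F0 andbT negbK => /eqP <-//.
case: (pselect (exists t, (0 < F t)%E)) => [[t0 Ht0]|no]; last first.
  exfalso; move: Ipos; rewrite integral0_eq ?ltxx // => t _.
  by apply: Fz => h; apply: no; exists t.
case: (pselect (exists t, t != t0 /\ (0 < F t)%E)) => [[t1 [ne H1]]|no1].
  by exists t0, t1; split => //; rewrite eq_sym.
exfalso; move: Ipos.
have F0' : forall t, t != t0 -> F t = 0%E.
  by move=> t ne; apply: Fz => h; apply: no1; exists t.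
rewrite -(@integral_setD1 _ _ t0).
- rewrite integral0_eq ?ltxx // => t [_ /eqP] ne; exact: F0'.
- exact: measurableD.
  apply: (eq_measurable_fun (fun=> 0%E)); last exact: measurable_cst. move=> t.
  by rewrite inE => -[_ /eqP ne]; rewrite F0'.
Qed.

Lemma key_box (R : realType) d (f : 'cV[R]_d -> R) :
  (forall x, 0 <= f x) -> qc f -> (0 < lebesgue_int f)%E ->
  exists z (r c : R), [/\ 0 < r, 0 < c & forall y, inbox z r y -> c <= f y].
Proof.
elim: d f => [|n IH] f f0 q /=.
  rewrite lte_fin => h; exists 0, 1, (f 0); split => // y _.
  by have -> : y = 0 by apply/matrixP => -[].
move=> Ipos.
have [t1 [t2 [ne H1 H2]]] := @int_two_points R
  (fun t => lebesgue_int (fun y : 'cV[R]_n => f (col_mx (const_mx t : 'cV_1) y)))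
  (fun t => lebesgue_int_ge0 (fun y => f0 _)) Ipos.
have [z1 [r1 [c1 [r10 c10 B1]]]] := IH _ (fun y => f0 _) (qc_slice (t:=t1) q) H1.
have [z2 [r2 [c2 [r20 c20 B2]]]] := IH _ (fun y => f0 _) (qc_slice (t:=t2) q) H2.
exact: (box_step q ne r10 r20 c10 c20 B1 B2).
Qed.
Lemma trmx_cont (R : realType) d : continuous (fun v : 'rV[R]_d => (v^T : 'cV[R]_d)).
Proof.
move=> u A /nbhs_ballP[e /= e0 eA].
apply/nbhs_ballP; exists e => //= v [_ uv]; apply: eA; split => // i j.
by rewrite !mxE; exact: uv.
Qed.

Lemma usc_bounded (R : realType) d (w : 'cV[R]_d -> R) (M : R) : usc w ->
  (forall x, w x != 0 -> `|x| <= M) -> exists B : R, forall x, w x <= B.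
Proof.
move=> uw bw.
pose K' := [set v : 'rV[R]_d | forall i, (fun=> `[-M, M]%classic) i (v ord0 i)].
have cK' : compact K' by apply: rV_compact => i; exact: segment_compact.
pose K := (fun v : 'rV[R]_d => (v^T : 'cV[R]_d)) @` K'.
have cK : compact K.
  by apply: continuous_compact => //; apply: continuous_subspaceT; exact: trmx_cont.
have := (compact_near_coveringP K).1 cK R (pinfty_nbhs R) (fun i x => w x < i) _.
case.
- move=> x _.
  have U := uw x 1 ltr01.
  exists ([set y | w y < w x + 1], [set i | w x + 1 < i]) => /=.
    split => //; exists (w x + 1); split; first exact: num_real.
    by move=> i.
  by move=> [a b] [/= Ha Hb]; exact: lt_trans Ha Hb.
move=> M0 [_ HM].
exists (Num.max (M0 + 1) 0) => x.
have [->|nz] := eqVneq (w x) 0; first by rewrite le_max lexx orbT.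
have Kx : K x.
  exists x^T; last by rewrite trmxK.
  move=> i /=; rewrite mxE /= in_itv /=.
  have := le_trans (entry_le_norm x i 0) (bw x nz).
  by rewrite ler_norml.
rewrite le_max; apply/orP; left; apply/ltW.
apply: (HM (M0 + 1)) => //; lra.
Qed.
Lemma powR_pos (R : realType) (a x : R) : 0 < a -> a `^ x = expR (x * ln a).
Proof. by move=> a0; rewrite /powR (gt_eqF a0). Qed.

Lemma good_box (R : realType) d (f : 'cV[R]_d -> R) (xi : R) :
  proper_log_concave f -> 0 < xi -> (xi%:E < sup_norm f)%E ->
  exists z (r : R), 0 < r /\ forall y, inbox z r y -> xi <= f y.
Proof.
move=> [f0 fusc flc [fI _]] xi0 xisup.
have qf := lc_qc f0 flc.
have [z [r [c [r0 c0 Bf]]]] := key_box f0 qf fI.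
have [_ [x0 _ <-]] := ereal_sup_gt xisup; rewrite lte_fin => ax0.
set a := f x0.
set c' := Num.min c (xi / 2).
have c'0 : 0 < c' by rewrite lt_min c0 divr_gt0.
have c'xi : c' < xi by rewrite gt_min; apply/orP; right; lra.
have Bf' : forall y, inbox z r y -> c' <= f y.
  by move=> y /Bf; apply: le_trans; rewrite ge_min lexx.
have a0 : 0 < a by exact: lt_trans xi0 ax0.
have l1 : ln c' < ln xi by rewrite ltr_ln // posrE.
have l2 : ln xi < ln a by rewrite ltr_ln // posrE.
set mu := (ln a - ln xi) / (ln a - ln c').
have mu0 : 0 < mu by apply: divr_gt0; lra.
have mu1 : mu < 1 by rewrite ltr_pdivrMr; lra.
set lam := 1 - mu.
exists (lam *: x0 + mu *: z), (mu * r); split; first exact: mulr_gt0.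
move=> y By.
set u := z + mu^-1 *: (y - (lam *: x0 + mu *: z)).
have Bu : inbox z r u.
  move=> i; rewrite !mxE addrAC subrr add0r normrM gtr0_norm ?invr_gt0 //.
  have := By i; rewrite !mxE => h.
  by rewrite [mu^-1 * _]mulrC ltr_pdivrMr // [r * mu]mulrC.
have Eu : lam *: x0 + (1 - lam) *: u = y.
  apply/matrixP => i j; rewrite /u /lam !mxE; field.
  by rewrite gt_eqF.
have := flc x0 u lam.
rewrite Eu => H; apply: le_trans (H _); last by apply/andP; split; rewrite /lam; lra.
have fu := Bf' u Bu.
have -> : xi = a `^ lam * c' `^ (1 - lam).
  rewrite !powR_pos // -expRD -[LHS]lnK ?posrE //; congr expR.
  rewrite /lam /mu; field.
  by rewrite subr_eq0 (gt_eqF (lt_trans l1 l2)).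
apply: ler_pM; rewrite ?powR_ge0 //.
have lm : 0 <= 1 - lam by rewrite /lam; lra.
by apply: (ge0_ler_powR lm) => //; rewrite nnegrE ?f0 ?ltW.
Qed.

Theorem lemmaA3 (R : realType) (d : nat) (f w : 'cV[R]_d -> R) :
  proper_log_concave f -> proper_log_concave w -> bounded_support w ->
  forall xi : R, 0 < xi -> (xi%:E < sup_norm f)%E ->
  exists g : 'cV[R]_d -> R,
    [/\ positive_position w g, (forall x, g x <= f x) & sup_norm g = xi%:E].
Proof.
move=> pf pw [M bw] xi xi0 xisup.
have f0 : forall x, 0 <= f x by case: pf.
have [z' [r' [r'0 Bf]]] := good_box pf xi0 xisup.
case: pw => w0 wusc wlc [wI _].
have [zw [rw [cw [rw0 cw0 Bw]]]] := key_box w0 (lc_qc w0 wlc) wI.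
have wz : cw <= w zw by apply: Bw => i; rewrite subrr normr0.
have [B wB] := usc_bounded wusc bw.
have ub : forall x, ((w x)%:E <= sup_norm w)%E.
  by move=> x; apply: ereal_sup_ubound; exists x.
have sB : (sup_norm w <= B%:E)%E by apply: ge_ereal_sup => _ [x _ <-]; rewrite lee_fin.
have [S HS] : exists S, sup_norm w = S%:E.
  move: (ub zw) sB; case: (sup_norm w) => [S _ _| //|//]; first by exists S.
have wS : forall x, w x <= S by move=> x; rewrite -lee_fin -HS.
have S0 : 0 < S by exact: lt_le_trans cw0 (le_trans wz (wS zw)).
set k := (`|M| + 1) / r'.
have k0 : 0 < k by apply: divr_gt0 => //; have := normr_ge0 M; lra.
set alpha := xi / S.
have alpha0 : 0 < alpha by exact: divr_gt0.
have aS : alpha * S = xi by rewrite /alpha divfK ?gt_eqF.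
have gle : forall p, alpha * w p <= xi.
  by move=> p; rewrite -aS ler_wpM2l ?(ltW alpha0) ?wS.
exists (fun x => alpha * w (k%:M *m x + - (k *: z'))).
split.
- exists k%:M, alpha, (- (k *: z')); split => //.
  split; first exact: tr_scalar_mx.
  move=> x nx0; rewrite mul_mx_scalar -scalemxAl mxE (mulr_gt0 k0) //.
  rewrite !mxE.
  have [i0 hi0] : exists i, x i 0 != 0.
    case: (pselect (exists i, x i 0 != 0)) => [//|no].
    exfalso; move/eqP: nx0; apply; apply/matrixP => i j; rewrite ord1 mxE.
    by apply/eqP; apply: contra_notT no => h; exists i.
  rewrite (bigD1 i0) //=.
  have h1 : 0 < x^T 0 i0 * x i0 0 by rewrite mxE lt0r mulf_neq0 //=; nra.
  have h2 : 0 <= \sum_(j | j != i0) x^T 0 j * x j 0.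
    by apply: sumr_ge0 => j _; rewrite mxE; nra.
  lra.
- move=> x; set p := k%:M *m x + - (k *: z').
  have [->|nz] := eqVneq (w p) 0; first by rewrite mulr0 f0.
  have Bx : inbox z' r' x.
    move=> i; have := le_trans (entry_le_norm p i 0) (bw p nz).
    rewrite /p mul_scalar_mx !mxE -mulrBr normrM (gtr0_norm k0) => h.
    rewrite -(ltr_pM2l k0); apply: le_lt_trans h _.
    rewrite /k divfK ?gt_eqF //; have := ler_norm M; lra.
  exact: le_trans (gle p) (Bf x Bx).
- have pre : forall p, exists x, k%:M *m x + - (k *: z') = p.
    move=> p; exists (z' + k^-1 *: p); rewrite mul_scalar_mx.
    by apply/matrixP => i j; rewrite !mxE; field; rewrite gt_eqF.
  have gs : forall p, ((alpha * w p)%:E <= sup_norm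
      (fun x => (alpha * w (k%:M *m x + - (k *: z')))%R))%E.
    move=> p; have [x <-] := pre p; apply: ereal_sup_ubound; by exists x.
  apply/le_anti/andP; split.
    by apply: ge_ereal_sup => _ [x _ <-]; rewrite lee_fin.
  case Hsg : (sup_norm (fun x => (alpha * w (k%:M *m x + - (k *: z')))%R)) => [s'| |].
  - rewrite lee_fin leNgt; apply/negP => hs.
    have hfin : ereal_sup (range (fun x => (w x)%:E)) \is a fin_num.
      by move: HS; rewrite /sup_norm => ->.
    have := @ub_ereal_sup_adherent R _ ((xi - s') / alpha) _ hfin.
    case; first by apply: divr_gt0; lra.
    move=> _ [p _ <-]; move: HS; rewrite /sup_norm => ->; rewrite -EFinB lte_fin => hp.
    have := gs p; rewrite Hsg lee_fin => hp'.
    have := hp; rewrite -(ltr_pM2l alpha0) mulrBr aS.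
    have -> : alpha * ((xi - s') / alpha) = xi - s' by field; rewrite gt_eqF.
    lra.
  - by rewrite leey.
  - by have := gs zw; rewrite Hsg leeNy_eq.
Qed.
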